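(* Two zero-mean nonsingular Gaussian reciprocal sequences over $[0,N]$ share the same reciprocal model if and only if they share the same reciprocal $CM_L$ model.
   Context: $[0,N]=(0,1,\ldots,N)$; $x=[x_0',\ldots,x_N']'$, $C=\mathrm{Cov}(x)$, $'$ denotes transpose. A sequence $[x_k]$ is reciprocal if for all $j<k<l$ in $[0,N]$ the conditional distribution of $x_k$ given $x_0,\ldots,x_j,x_l,\ldots,x_N$ equals that given $x_j,x_l$. Reciprocal model: a zero-mean nonsingular Gaussian reciprocal sequence obeys $R^0_kx_k-R^-_kx_{k-1}-R^+_kx_{k+1}=e^R_k$, $k\in[1,N-1]$, with $R^0_k=A_k$, $R^+_k=-B_k$, $R^-_k=-B_{k-1}'$, where $A_k$ is the $(k,k)$ block and $B_k$ the $(k,k+1)$ block of $C^{-1}$; two sequences share the same reciprocal model if these coefficients for $k\in[1,N-1]$ coincide. Reciprocal $CM_L$ model: a reciprocal sequence obeys $x_k=G_{k,k-1}x_{k-1}+G_{k,N}x_N+e_k$, $k\in[1,N-1]$, where $G_{k,k-1}x_{k-1}+G_{k,N}x_N=E[x_k\mid x_0,\ldots,x_{k-1},x_N]$ and $[e_k]$ is a zero-mean white Gaussian sequence with $G_k=\mathrm{Cov}(e_k)$; two sequences share the same reciprocal $CM_L$ model if the coefficients $G_{k,k-1},G_{k,N},G_k$, $k\in[1,N-1]$, coincide. *)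

(* Defs.v *)
From HB Require Import structures.
From mathcomp Require Import all_boot all_order all_algebra.
Set Implicit Arguments. Unset Strict Implicit. Unset Printing Implicit Defensive.
Import Order.TTheory GRing.Theory Num.Theory.
Local Open Scope ring_scope.

(* A zero-mean Gaussian sequence x_0,...,x_N with x_k in R^d is represented by
   its block covariance  Cb i j = Cov(x_i, x_j) = E[x_i x_j'] (a d x d block). *)
Section Defs.
Variables (R : realFieldType) (d N : nat).
Notation idx := 'I_N.+1.
Notation blk := 'M[R]_d.
Implicit Types (Cb : idx -> idx -> blk).

Definition covmx Cb : 'M[R]_(\sum_(i < N.+1) d, \sum_(j < N.+1) d) :=
  \mxblock_(i < N.+1, j < N.+1) Cb i j.

Definition nonsingular_gaussian_cov Cb : Prop :=
  (forall i j, Cb j i = (Cb i j)^T) /\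
  (forall v : 'rV[R]_(\sum_(i < N.+1) d), v != 0 -> 0 < (v *m covmx Cb *m v^T) 0 0).

(* Conditional law of x_k given x_S, for a zero-mean Gaussian sequence:
   it is the Gaussian law with mean  \sum_(i in S) H i x_i  (= E[x_k | x_S],
   characterised by orthogonality of the error to every x_m, m in S) and
   covariance Sig = Cov(x_k - \sum_(i in S) H i x_i). *)
Definition cond_law Cb (k : idx) (S : pred idx) (H : idx -> blk) (Sig : blk) : Prop :=
  [/\ (forall i, ~~ S i -> H i = 0),
      (forall m, S m -> Cb k m - \sum_(i | S i) H i *m Cb i m = 0) &
      Sig = Cb k k - \sum_i H i *m Cb i k - \sum_i Cb k i *m (H i)^T
            + \sum_i \sum_i' H i *m Cb i i' *m (H i')^T].

Definition outer_set (j l : idx) : pred idx := [pred i : idx | (i <= j)%N || (l <= i)%N].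
Definition pair_set (j l : idx) : pred idx := [pred i : idx | (i == j) || (i == l)].

Definition reciprocal Cb : Prop :=
  forall j k l : idx, (j < k < l)%N ->
    forall H Sig, cond_law Cb k (outer_set j l) H Sig <-> cond_law Cb k (pair_set j l) H Sig.

Definition Ablk Cb (k : nat) : blk :=
  submxblock (invmx (covmx Cb)) (inord k : idx) (inord k : idx).
Definition Bblk Cb (k : nat) : blk :=
  submxblock (invmx (covmx Cb)) (inord k : idx) (inord k.+1 : idx).

Definition R0 Cb k : blk := Ablk Cb k.
Definition Rplus Cb k : blk := - Bblk Cb k.
Definition Rminus Cb k : blk := - (Bblk Cb k.-1)^T.

Definition same_reciprocal_model Cb1 Cb2 : Prop :=
  forall k : nat, (1 <= k <= N.-1)%N ->
    [/\ R0 Cb1 k = R0 Cb2 k, Rplus Cb1 k = Rplus Cb2 k & Rminus Cb1 k = Rminus Cb2 k].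

(* reciprocal CM_L model: x_k = G1 x_{k-1} + G2 x_N + e_k with
   G1 x_{k-1} + G2 x_N = E[x_k | x_0..x_{k-1}, x_N] and Gk = Cov(e_k) *)
Definition CML_coeffs Cb (k : idx) (G1 G2 Gk : blk) : Prop :=
  cond_law Cb k [pred i : idx | (i < k)%N || (i == N :> nat)]
    (fun i : idx => if (i == k.-1 :> nat) then G1
                    else if (i == N :> nat) then G2 else 0) Gk.

Definition same_CML_model Cb1 Cb2 : Prop :=
  forall k : idx, (1 <= k <= N.-1)%N ->
    forall G1 G2 Gk, CML_coeffs Cb1 k G1 G2 Gk <-> CML_coeffs Cb2 k G1 G2 Gk.

End Defs.

(* Main.v *)
Require Import Defs.
From HB Require Import structures.
From mathcomp Require Import all_boot all_order all_algebra.
From mathcomp Require Import ring lra zify.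
Set Implicit Arguments. Unset Strict Implicit. Unset Printing Implicit Defensive.
Import Order.TTheory GRing.Theory Num.Theory.
Local Open Scope ring_scope.

Section Work.
Variables (R : realFieldType) (d N : nat).
Notation idx := 'I_N.+1.
Notation blk := 'M[R]_d.
Notation Fam := (idx -> blk).
Notation Cov := (idx -> idx -> blk).

Definition qf (C : Cov) (w : idx -> 'rV[R]_d) : 'M[R]_1 :=
  \sum_m (\sum_i w i *m C i m) *m (w m)^T.

Lemma qf_flat (C : Cov) (w : idx -> 'rV[R]_d) :
  (\mxrow_i w i) *m covmx C *m (\mxrow_i w i)^T = qf C w.
Proof.
rewrite /covmx mul_mxrow_mxblock tr_mxrow mul_mxrow_mxcol.
by [].
Qed.

Definition PDb (C : Cov) := forall w : idx -> 'rV[R]_d, (exists i, w i != 0) -> 0 < qf C w 0 0.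

Lemma ngc_PDb C : nonsingular_gaussian_cov C -> PDb C.
Proof.
move=> [_ hpd] w [i wi]; rewrite -qf_flat; apply: hpd.
apply: contra wi => /eqP v0.
by rewrite -(mxrowK w i) v0 submxrow0.
Qed.

Lemma PDb_unitmx C : PDb C -> covmx C \in unitmx.
Proof.
move=> hpd; rewrite unitmxE unitfE; apply/negP => /det0P [v v0 vA].
set w := fun i => submxrow v i.
have vw : v = \mxrow_i w i by rewrite submxrowK.
have [i wi] : exists i, w i != 0.
  apply/existsP; apply: contraR v0; rewrite negb_exists => /forallP h.
  by rewrite vw; apply/eqP/mxrowP => j; rewrite mxrowK submxrow0; apply/eqP; have := h j; rewrite negbK.
have := hpd w (ex_intro _ i wi); rewrite -qf_flat -vw vA mul0mx mxE ltxx.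
by [].
Qed.

Definition dl (i m : idx) : blk := if i == m then 1%:M else 0.

Lemma blk_inv (X Y : Cov) :
  \mxblock_(i, j) X i j *m \mxblock_(i, j) Y i j = 1%:M ->
  forall i l, \sum_j X i j *m Y j l = dl i l.
Proof.
move=> h i l; rewrite mul_mxblock in h.
have := congr1 (fun M => submxblock M i l) h.
rewrite mxblockK -(mxdiagZ (p_ := fun _ : idx => d) 1) mxblockK => ->.
by rewrite /dl; case: eqP => // _; rewrite conform_mx_id.
Qed.


Definition symC (C : Cov) := forall i j, C j i = (C i j)^T.
Definition Pb (C : Cov) (i j : idx) : blk := submxblock (invmx (covmx C)) i j.

Lemma Pb_mx C : \mxblock_(i, j) Pb C i j = invmx (covmx C).
Proof. by rewrite /Pb submxblockK. Qed.

Lemma PC C : PDb C -> forall i l, \sum_j Pb C i j *m C j l = dl i l.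
Proof.
move=> h; apply: blk_inv; rewrite Pb_mx mulVmx //; exact: PDb_unitmx.
Qed.

Lemma CP C : PDb C -> forall i l, \sum_j C i j *m Pb C j l = dl i l.
Proof.
move=> h; apply: blk_inv; rewrite Pb_mx mulmxV //; exact: PDb_unitmx.
Qed.

Lemma Psym C : symC C -> forall i j, Pb C j i = (Pb C i j)^T.
Proof.
move=> hs i j; rewrite /Pb tr_submxblock trmx_inv /covmx tr_mxblock.
congr (submxblock (invmx _) _ _); apply: eq_mxblock => a b; by rewrite (hs a b) trmxK.
Qed.

Definition crow (C : Cov) (a : Fam) (m : idx) : blk := \sum_i a i *m C i m.
Definition ipC (C : Cov) (a b : Fam) : blk := \sum_m crow C a m *m (b m)^T.

Lemma dl_tr i m : (dl i m)^T = dl i m.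
Proof. by rewrite /dl; case: eqP; rewrite ?trmx1 ?trmx0. Qed.

Lemma dl_sym i m : dl i m = dl m i.
Proof. by rewrite /dl eq_sym. Qed.

Lemma sum_dl_l k (X : Fam) : \sum_i dl k i *m X i = X k.
Proof.
rewrite (bigD1 k) //= big1 ?addr0 /dl ?eqxx ?mul1mx // => i /negbTE.
by rewrite eq_sym => ->; rewrite mul0mx.
Qed.

Lemma sum_dl_r p k (X : idx -> 'M[R]_(p, d)) : \sum_i X i *m dl i k = X k.
Proof.
rewrite (bigD1 k) //= big1 ?addr0 /dl ?eqxx ?mulmx1 // => i /negbTE -> ; by rewrite mulmx0.
Qed.

Lemma sum_dl_rT p k (X : idx -> 'M[R]_(p, d)) : \sum_i X i *m (dl k i)^T = X k.
Proof. by under eq_bigr do rewrite dl_tr dl_sym; rewrite sum_dl_r. Qed.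

Lemma crow_dl C k m : crow C (dl k) m = C k m.
Proof. by rewrite /crow sum_dl_l. Qed.

Lemma ipC_dl C a m : ipC C a (dl m) = crow C a m.
Proof. by rewrite /ipC sum_dl_rT. Qed.

Lemma ipC_tr C a b : symC C -> (ipC C a b)^T = ipC C b a.
Proof.
move=> hs; rewrite /ipC /crow raddf_sum /=.
under eq_bigr do rewrite trmx_mul trmxK raddf_sum /= mulmx_sumr.
under [RHS]eq_bigr do rewrite mulmx_suml.
rewrite exchange_big /=; apply: eq_bigr => i _; apply: eq_bigr => m _.
by rewrite trmx_mul hs trmxK mulmxA.
Qed.

Lemma uniq0 C (S : pred idx) (D : Fam) : PDb C ->
  (forall i, ~~ S i -> D i = 0) -> (forall m, S m -> crow C D m = 0) ->
  forall i, D i = 0.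
Proof.
move=> hpd h0 hS.
have key : forall a : 'rV[R]_d, forall i, a *m D i = 0.
  move=> a i; apply/eqP/negPn/negP => hi.
  have := hpd (fun i => a *m D i) (ex_intro _ i hi).
  suff -> : qf C (fun i => a *m D i) = 0 by rewrite mxE ltxx.
  rewrite /qf big1 // => m _.
  under eq_bigr do rewrite -mulmxA.
  rewrite -mulmx_sumr.
  case: (boolP (S m)) => Sm.
    by have := hS m Sm; rewrite /crow => ->; rewrite mulmx0 mul0mx.
  by rewrite h0 // mulmx0 trmx0 mulmx0.
move=> i; apply/row_matrixP => r; rewrite rowE key; by rewrite row0.
Qed.


Lemma wwT_ge0 (w : 'rV[R]_d) : 0 <= (w *m w^T) 0 0.
Proof.
rewrite mxE; apply: sumr_ge0 => j _; rewrite mxE -expr2; exact: sqr_ge0.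
Qed.

Lemma wwT_gt0 (w : 'rV[R]_d) : w != 0 -> 0 < (w *m w^T) 0 0.
Proof.
move=> w0.
have [j wj] : exists j, w 0 j != 0.
  apply/existsP; apply: contraR w0; rewrite negb_exists => /forallP h.
  apply/eqP/rowP => j; rewrite mxE; have := h j; by rewrite negbK => /eqP.
rewrite mxE (bigD1 j) //= mxE.
have h1 : 0 < w 0 j * w 0 j by rewrite lt0r mulf_neq0 // -expr2 sqr_ge0.
have h2 : 0 <= \sum_(i | i != j) w 0 i * w^T i 0.
  by apply: sumr_ge0 => i _; rewrite mxE -expr2; exact: sqr_ge0.
by apply: (lt_le_trans h1); rewrite lerDl.
Qed.

Lemma qf_ge0 C w : PDb C -> 0 <= qf C w 0 0.
Proof.
move=> h; case: (boolP [exists i, w i != 0]) => [/existsP [i hi]|].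
  by apply/ltW/h; exists i.
rewrite negb_exists => /forallP hw.
have w0 : forall i, w i = 0 by move=> i; have := hw i; rewrite negbK => /eqP.
rewrite /qf big1 ?mxE // => m _; by rewrite w0 trmx0 mulmx0.
Qed.

Lemma exist_sol C (S : pred idx) k : PDb C ->
  exists H : Fam, (forall i, ~~ S i -> H i = 0) /\
    (forall m, S m -> C k m - \sum_(i | S i) H i *m C i m = 0).
Proof.
move=> hpd.
pose C' : Cov := fun i m => if S i && S m then C i m else dl i m.
pose wm (w : idx -> 'rV[R]_d) i := if S i then w i else 0.
have rowC' : forall (w : idx -> 'rV[R]_d) m,
    \sum_i w i *m C' i m = if S m then \sum_i wm w i *m C i m else w m.
  move=> w m; case: (boolP (S m)) => Sm.
    apply: eq_bigr => i _; rewrite /C' /wm Sm andbT; case: (boolP (S i)) => Si //.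
    rewrite /dl; case: eqP => [eim|_]; last by rewrite mulmx0 mul0mx.
    by move: Si; rewrite eim Sm.
  rewrite /C' -(sum_dl_r m w); apply: eq_bigr => i _; by rewrite (negbTE Sm) andbF.
have pdC' : PDb C'.
  move=> w [i wi].
  have -> : qf C' w = qf C (wm w) + \sum_m (if S m then 0 else w m *m (w m)^T).
    rewrite /qf -big_split /=; apply: eq_bigr => m _; rewrite rowC' /wm.
    by case: (S m); rewrite ?addr0 ?trmx0 ?mulmx0 ?add0r.
  have -> : forall A B : 'M[R]_1, (A + B) 0 0 = A 0 0 + B 0 0 by move=> A B; rewrite mxE.
  have h1 := qf_ge0 (wm w) hpd.
  have h2 : 0 <= (\sum_m (if S m then 0 else w m *m (w m)^T)) 0 0.
    by rewrite summxE; apply: sumr_ge0 => m _; case: (S m); [rewrite mxE | exact: wwT_ge0].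
  case: (boolP [exists i, wm w i != 0]) => [/existsP [j hj]|].
    have := hpd (wm w) (ex_intro _ j hj) => h3.
    lra.
  rewrite negb_exists => /forallP hw.
  have Si : ~~ S i by apply: contra (hw i) => Si; rewrite /wm Si.
  have h3 : 0 < (if S i then 0 else w i *m (w i)^T) 0 0 by rewrite (negbTE Si) wwT_gt0.
  have h4 : 0 <= \sum_(m | m != i) (if S m then 0 else w m *m (w m)^T) 0 0.
    by apply: sumr_ge0 => m _; case: (S m); [rewrite mxE | exact: wwT_ge0].
  have h5 : (\sum_m (if S m then 0 else w m *m (w m)^T)) 0 0 =
     (if S i then 0 else w i *m (w i)^T) 0 0 + \sum_(m | m != i) (if S m then 0 else w m *m (w m)^T) 0 0.
    by rewrite summxE (bigD1 i).
  lra.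
pose Qb := Pb C'.
have hQ := PC pdC'.
pose r m := if S m then C k m else 0.
pose H i := \sum_m r m *m Qb m i.
have hH : forall l, \sum_i H i *m C' i l = r l.
  move=> l; rewrite /H.
  under eq_bigr do rewrite mulmx_suml.
  rewrite exchange_big /= -(sum_dl_r l r); apply: eq_bigr => m _.
  rewrite -hQ mulmx_sumr; apply: eq_bigr => i _; by rewrite mulmxA.
exists H; split.
  move=> i Si; have := hH i; rewrite /r (negbTE Si) => <-.
  rewrite -{1}(sum_dl_r i H); apply: eq_bigr => j _; by rewrite /C' (negbTE Si) andbF.
move=> m Sm; have := hH m; rewrite /r Sm => <-.
rewrite [X in _ - X]big_mkcond /=; apply/eqP; rewrite subr_eq0; apply/eqP; apply: eq_bigr => i _.
rewrite /C' Sm andbT; case: (boolP (S i)) => Si //.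
rewrite /dl; case: eqP => [eim|_]; last by rewrite mulmx0.
by move: Si; rewrite eim Sm.
Qed.


Definition inter (k : idx) : bool := (0 < k)%N && (k < N)%N.

Definition Hf (g1 g2 : blk) (k : idx) : Fam :=
  fun i : idx => if (i == k.-1 :> nat) then g1 else if (i == N :> nat) then g2 else 0.

Definition eps (g1 g2 : blk) (k : idx) : Fam := fun i => dl k i - Hf g1 g2 k i.

Definition km1 (k : idx) : idx := inord k.-1.

Lemma km1E (k : idx) : (km1 k : nat) = k.-1.
Proof. by rewrite /km1 inordK // (leq_ltn_trans (leq_pred _) (ltn_ord k)). Qed.

Lemma sum_if p (j : idx) (F : idx -> 'M[R]_(p, d)) :
  \sum_m (if m == j then F m else 0) = F j.
Proof. rewrite (bigD1 j) //= eqxx big1 ?addr0 // => m /negbTE -> //. Qed.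

Lemma Hf_split g1 g2 k m : inter k ->
  Hf g1 g2 k m = (if m == km1 k then g1 else 0) + (if m == ord_max then g2 else 0).
Proof.
case/andP=> k0 kN; rewrite /Hf -!val_eqE /= km1E.
case: eqP => [->|_]; last by rewrite add0r.
have -> : (k.-1 == N) = false by apply/negbTE; rewrite neq_ltn; apply/orP; left; apply: leq_ltn_trans (leq_pred _) kN.
by rewrite addr0.
Qed.

Lemma ipC_eps C a g1 g2 k : inter k ->
  ipC C a (eps g1 g2 k) = crow C a k - crow C a (km1 k) *m g1^T - crow C a ord_max *m g2^T.
Proof.
move=> hk; rewrite /ipC /eps.
under eq_bigr do rewrite raddfB /= mulmxBr Hf_split // raddfD /= mulmxDr.
rewrite sumrB big_split /= sum_dl_rT opprD addrA; congr (_ - _ - _).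
  rewrite -(sum_if (km1 k) (fun m => crow C a m *m g1^T)); apply: eq_bigr => m _.
  by case: eqP; rewrite ?trmx0 ?mulmx0.
rewrite -(sum_if ord_max (fun m => crow C a m *m g2^T)); apply: eq_bigr => m _.
by case: eqP; rewrite ?trmx0 ?mulmx0.
Qed.

Lemma crow_eps C g1 g2 k m :
  crow C (eps g1 g2 k) m = C k m - \sum_i Hf g1 g2 k i *m C i m.
Proof.
rewrite /crow /eps; under eq_bigr do rewrite mulmxBl.
by rewrite sumrB sum_dl_l.
Qed.

Lemma sig_ipC C k (H : Fam) :
  C k k - \sum_i H i *m C i k - \sum_i C k i *m (H i)^T
    + \sum_i \sum_i' H i *m C i i' *m (H i')^T
  = ipC C (fun i => dl k i - H i) (fun i => dl k i - H i).
Proof.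
have cr : forall m, crow C (fun i => dl k i - H i) m = C k m - \sum_i H i *m C i m.
  move=> m; rewrite /crow; under eq_bigr do rewrite mulmxBl.
  by rewrite sumrB sum_dl_l.
rewrite /ipC; symmetry.
under eq_bigr do rewrite cr raddfB /= mulmxBr.
rewrite sumrB sum_dl_rT.
under [X in _ - X]eq_bigr do rewrite mulmxBl mulmx_suml.
rewrite sumrB opprB.
have -> : \sum_m \sum_i H i *m C i m *m (H m)^T = \sum_i \sum_i' H i *m C i i' *m (H i')^T.
  by rewrite exchange_big.
set a := C k k - _; set e := \sum_i \sum_i' _; set c := \sum_i C k i *m _.
by rewrite addrA addrAC.
Qed.

Definition cmlS (k : idx) : pred idx := [pred i : idx | (i < k)%N || (i == N :> nat)].

Lemma Hf_off g1 g2 k i : inter k -> ~~ cmlS k i -> Hf g1 g2 k i = 0.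
Proof.
case/andP => k0 kN; rewrite /cmlS /= negb_or => /andP [ik iN].
rewrite /Hf (negbTE iN); case: eqP => // e; move: ik; rewrite e.
by rewrite ltn_predL k0.
Qed.

Lemma CML_iff C k g1 g2 gk : inter k ->
  CML_coeffs C k g1 g2 gk <->
  ((forall m, cmlS k m -> crow C (eps g1 g2 k) m = 0) /\
   gk = ipC C (eps g1 g2 k) (eps g1 g2 k)).
Proof.
move=> hk.
have sumS : forall m, \sum_(i | cmlS k i) Hf g1 g2 k i *m C i m = \sum_i Hf g1 g2 k i *m C i m.
  move=> m; rewrite [RHS](bigID (cmlS k)) /= [X in _ + X]big1 ?addr0 // => i hi.
  by rewrite Hf_off // mul0mx.
rewrite /CML_coeffs; split.
  case=> _ h2 h3; split.
    move=> m hm; rewrite crow_eps -sumS; exact: h2.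
  by rewrite h3 sig_ipC.
case=> h2 h3; split.
- by move=> i hi; apply: (Hf_off g1 g2 hk hi).
- move=> m hm; rewrite sumS -crow_eps; exact: h2.
- by rewrite h3 -sig_ipC.
Qed.


Lemma ipC_quad C (e : Fam) (a : 'rV[R]_d) :
  a *m ipC C e e *m a^T = qf C (fun i => a *m e i).
Proof.
rewrite /ipC /qf (mulmx_sumr a) mulmx_suml; apply: eq_bigr => m _.
rewrite /crow trmx_mul !mulmxA mulmx_sumr; congr (_ *m _ *m _); apply: eq_bigr => i _.
by rewrite mulmxA.
Qed.

Section G.
Variables (g1 g2 gk : Fam).
Definition E (l : idx) : Fam := eps (g1 l) (g2 l) l.
Definition Mm (i j : idx) : blk := \sum_(l | inter l) (E l i)^T *m invmx (gk l) *m E l j.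
Definition CMLall C := forall l, inter l -> CML_coeffs C l (g1 l) (g2 l) (gk l).

Lemma E_self k : inter k -> E k k = 1%:M.
Proof.
case/andP => k0 kN; rewrite /E /eps /dl eqxx /Hf.
have -> : (val k == k.-1) = false by apply/negbTE; rewrite neq_ltn ltn_predL k0 orbT.
by rewrite (ltn_eqF kN) subr0.
Qed.

Lemma gram_lt C k l : CMLall C -> inter k -> inter l -> (l < k)%N -> ipC C (E k) (E l) = 0.
Proof.
move=> hc hk hl lk; have [ho _] := (CML_iff C (g1 k) (g2 k) (gk k) hk).1 (hc k hk).
rewrite /E ipC_eps // -/(E k) !ho ?mul0mx ?subr0 //= /cmlS /=.
- by rewrite eqxx orbT.
- by rewrite km1E; apply/orP; left; apply: leq_ltn_trans (leq_pred _) lk.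
- by rewrite lk.
Qed.

Lemma gram C k l : symC C -> CMLall C -> inter k -> inter l ->
  ipC C (E k) (E l) = if k == l then gk l else 0.
Proof.
move=> hs hc hk hl; case: eqP => [<-|/eqP kl].
  by have [_ ->] := (CML_iff C (g1 k) (g2 k) (gk k) hk).1 (hc k hk).
case: (ltngtP k l) => [kl'|lk|e]; last by move: kl; rewrite -val_eqE /= e eqxx.
  by rewrite -ipC_tr // gram_lt // trmx0.
exact: gram_lt.
Qed.

Lemma gk_sym C l : symC C -> CMLall C -> inter l -> (gk l)^T = gk l.
Proof.
move=> hs hc hl; have [_ ->] := (CML_iff C (g1 l) (g2 l) (gk l) hl).1 (hc l hl).
by rewrite ipC_tr.
Qed.

Lemma gk_unit C l : PDb C -> CMLall C -> inter l -> gk l \in unitmx.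
Proof.
move=> hpd hc hl; rewrite unitmxE unitfE; apply/negP => /det0P [a a0 aG].
have [_ hG] := (CML_iff C (g1 l) (g2 l) (gk l) hl).1 (hc l hl).
have hw : a *m E l l != 0 by rewrite E_self // mulmx1.
have := hpd (fun i => a *m E l i) (ex_intro _ l hw).
by rewrite -(ipC_quad C (E l) a) -hG aG mul0mx mxE ltxx.
Qed.


Lemma crow_Mrow C k m (f : Fam) :
  crow C (fun j => f j - Mm k j) m =
  crow C f m - \sum_(l | inter l) (E l k)^T *m invmx (gk l) *m crow C (E l) m.
Proof.
rewrite /crow; under eq_bigr do rewrite mulmxBl.
rewrite sumrB; congr (_ - _); rewrite /Mm.
under eq_bigr do rewrite mulmx_suml.
rewrite exchange_big /=; apply: eq_bigr => l _.
rewrite mulmx_sumr; apply: eq_bigr => j _; by rewrite mulmxA.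
Qed.

Lemma lemA C : PDb C -> symC C -> CMLall C ->
  forall k, inter k -> forall j, Pb C k j = Mm k j.
Proof.
move=> hpd hs hc k hk.
pose f := fun j => Pb C k j - Mm k j.
suff h0 : forall j, f j = 0 by move=> j; apply/eqP; rewrite -subr_eq0; apply/eqP; exact: h0.
pose X l := (E l k)^T *m invmx (gk l).
have hform : forall m, crow C f m = dl k m - \sum_(l | inter l) X l *m crow C (E l) m.
  move=> m; rewrite crow_Mrow /crow PC //.
have orth : forall l m, inter l -> cmlS l m -> crow C (E l) m = 0.
  move=> l m hl hm; have [ho _] := (CML_iff C (g1 l) (g2 l) (gk l) hl).1 (hc l hl); exact: ho.
have hbd : forall b : idx, ~~ inter b -> crow C f b = 0.
  move=> b hb; rewrite hform big1 ?subr0.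
    rewrite /dl; case: eqP => // e; by move: hk hb; rewrite e => ->.
  move=> l hl; rewrite orth ?mulmx0 //; move: hb hl; rewrite /inter /cmlS /= negb_and -!leqNgt.
  case/orP => [b0|Nb] /andP [l0 lN].
    by rewrite (leq_ltn_trans b0 l0).
  by apply/orP; right; rewrite eqn_leq Nb andbT -ltnS ltn_ord.
have hphi : forall l, inter l -> ipC C f (E l) = 0.
  move=> l hl; rewrite /ipC; under eq_bigr do rewrite hform mulmxBl.
  rewrite sumrB sum_dl_l.
  under eq_bigr do rewrite mulmx_suml.
  rewrite exchange_big /=.
  have hX : forall l', \sum_i X l' *m crow C (E l') i *m (E l i)^T = X l' *m ipC C (E l') (E l).
    by move=> l'; rewrite /ipC mulmx_sumr; apply: eq_bigr => i _; rewrite mulmxA.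
  under eq_bigr => l' hl' do rewrite hX gram //.
  rewrite (bigD1 l) //= eqxx big1 ?addr0.
    by rewrite /X -mulmxA mulVmx ?mulmx1 ?subrr // (gk_unit hpd hc hl).
  move=> l' /andP [_ /negbTE ->]; by rewrite mulmx0.
have hind : forall n (m : idx), (m <= n)%N -> crow C f m = 0.
  elim=> [|n IH] m hm.
    by apply: hbd; rewrite /inter; move: hm; rewrite leqn0 => /eqP ->.
  case: (boolP (inter m)) => him; last exact: hbd.
  have := hphi m him; rewrite ipC_eps // (IH (km1 m)); last first.
    by rewrite km1E; move: hm; case: (nat_of_ord m).
  rewrite (hbd ord_max); last by rewrite /inter /= ltnn andbF.
  by rewrite !mul0mx !subr0.
apply: (uniq0 (S := predT) hpd) => // m _; apply: (hind m); exact: leqnn.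
Qed.

Lemma tri (a : Fam) t :
  (forall j, inter j -> (t <= j)%N -> \sum_(l | inter l) a l *m E l j = 0) ->
  forall l, inter l -> (t <= l)%N -> a l = 0.
Proof.
move=> H.
suff : forall n l, inter l -> (t <= l)%N -> (N - l <= n)%N -> a l = 0.
  by move=> h l hl htl; apply: (h N) => //; rewrite leq_subr.
elim=> [|n IH] l hl htl hn.
  by move: hl hn; rewrite /inter => /andP [_ lN]; lia.
have := H l hl htl; rewrite (bigD1 l) //= E_self // mulmx1 big1 ?addr0 //.
move=> l' /andP [hl' nl']; rewrite /E /eps /dl (negbTE nl') sub0r /Hf.
have -> : (val l == N) = false by case/andP: hl => _ lN; rewrite ltn_eqF.
case: eqP => [e|_]; last by rewrite oppr0 mulmx0.
rewrite (IH l') ?mul0mx //; move: hl hl' htl hn e; rewrite /inter => /andP [? ?] /andP [? ?]; lia.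
Qed.

Lemma lemB C : PDb C -> symC C ->
  (forall l, inter l -> gk l \in unitmx /\ (gk l)^T = gk l) ->
  (forall i j, inter j -> Pb C i j = Mm i j) -> CMLall C.
Proof.
move=> hpd hs hg hP.
pose a m l := (crow C (E l) m)^T *m invmx (gk l).
have hm : forall m j, inter j -> \sum_(l | inter l) a m l *m E l j = dl m j.
  move=> m j hj; rewrite -(CP hpd m j).
  under [RHS]eq_bigr => i _ do rewrite hP // /Mm mulmx_sumr.
  rewrite exchange_big /=; apply: eq_bigr => l _.
  rewrite /a /crow raddf_sum /= mulmx_suml mulmx_suml; apply: eq_bigr => i _.
  by rewrite trmx_mul -hs !mulmxA.
have a0 : forall m l, inter l -> a m l = 0 -> crow C (E l) m = 0.
  move=> m l hl; rewrite /a => h; apply: trmx_inj; rewrite trmx0.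
  have [gu _] := hg l hl.
  by rewrite -[_^T]mulmx1 -(mulVmx gu) mulmxA h mul0mx.
have hz : forall (m l : idx), inter l -> (m < l)%N -> crow C (E l) m = 0.
  move=> m l hl ml; apply: a0 => //; apply: (tri (t := m.+1)) => // j hj mj.
  by rewrite hm // /dl; case: eqP => // e; move: mj; rewrite e ltnn.
have hN : forall l, inter l -> crow C (E l) ord_max = 0.
  move=> l hl; apply: a0 => //; apply: (tri (t := 1)) => // [j hj _|]; last by case/andP: hl.
  rewrite hm // /dl; case: eqP => // e; move: hj; by rewrite -e /inter /= ltnn andbF.
have hd : forall l, inter l -> crow C (E l) l = gk l.
  move=> l hl; have := hm l l hl; rewrite (bigD1 l) //= E_self // mulmx1 big1 ?addr0.
    rewrite /dl eqxx /a => h; have [gu gs] := hg l hl.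
    apply: trmx_inj; rewrite gs -[_^T]mulmx1 -(mulVmx gu) mulmxA h mul1mx //.
  move=> l' /andP [hl' nl']; case: (ltngtP l l') => [ll'|l'l|e].
  - rewrite /a hz ?trmx0 ?mul0mx //.
  - rewrite /E /eps /dl (negbTE nl') sub0r /Hf.
    have -> : (val l == N) = false by case/andP: hl => _ lN; rewrite ltn_eqF.
    case: eqP => [e|_]; last by rewrite oppr0 mulmx0.
    by move: l'l e; lia.
  - by move: nl'; rewrite -val_eqE /= e eqxx.
move=> k hk; apply/(CML_iff C (g1 k) (g2 k) (gk k) hk); split.
  move=> m; rewrite /cmlS /= => /orP [mk|/eqP mN].
    exact: hz.
  have -> : m = ord_max by apply: val_inj.
  exact: hN.
rewrite ipC_eps // -/(E k) hd // hN // hz ?mul0mx ?subr0 //.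
by rewrite km1E ltn_predL; case/andP: hk.
Qed.

End G.


Lemma cond_law_ext C k (S S' : pred idx) (H H' : Fam) Sig :
  (forall i, S i = S' i) -> (forall i, H i = H' i) ->
  cond_law C k S H Sig -> cond_law C k S' H' Sig.
Proof.
move=> hS hH [h1 h2 h3]; split.
- by move=> i; rewrite -hS -hH; exact: h1.
- move=> m; rewrite -hS => Sm; rewrite -[RHS](h2 m Sm); congr (_ - _).
  by apply: eq_big => i; [rewrite hS | rewrite hH].
- rewrite h3; congr (_ - _ - _ + _).
  + by apply: eq_bigr => i _; rewrite hH.
  + by apply: eq_bigr => i _; rewrite hH.
  + by apply: eq_bigr => i _; apply: eq_bigr => i' _; rewrite !hH.
Qed.

Definition sigf C k (H : Fam) : blk :=
  C k k - \sum_i H i *m C i k - \sum_i C k i *m (H i)^T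
            + \sum_i \sum_i' H i *m C i i' *m (H i')^T.

Lemma inter_le (k : idx) : inter k = (1 <= k <= N.-1)%N.
Proof. rewrite /inter; have := ltn_ord k; lia. Qed.

Lemma zpat C : PDb C -> reciprocal C -> forall k, inter k ->
  forall j : idx, (j != k.-1 :> nat) -> j != k -> (j != k.+1 :> nat) -> Pb C k j = 0.
Proof.
move=> hpd hr k hk j j1 j2 j3.
have hkN : (k.+1 < N.+1)%N by case/andP: hk => _ kN.
pose l0 : idx := inord k.+1.
have l0E : (l0 : nat) = k.+1 by rewrite inordK.
pose S := outer_set (km1 k) l0.
have hSE : forall i, S i = (i != k).
  move=> i; rewrite /S /outer_set /= km1E l0E -val_eqE /=; case/andP: hk => k0 _; lia.
have [H [hoff horth]] := exist_sol S k hpd.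
have hcl : cond_law C k S H (sigf C k H) by split.
have := (hr (km1 k) k l0 _ H (sigf C k H)).1 hcl.
case.
  by rewrite km1E l0E ltnSn andbT ltn_predL; case/andP: hk.
move=> hpair _ _.
have Hk : H k = 0 by apply: hoff; rewrite hSE eqxx.
pose D i := Pb C k i - Pb C k k *m (dl k i - H i).
have hD : forall i, D i = 0.
  apply: (uniq0 (S := S) hpd).
    move=> i; rewrite hSE negbK => /eqP ->.
    by rewrite /D /dl eqxx Hk subr0 mulmx1 subrr.
  move=> m Sm.
  have hcr : crow C (fun i => dl k i - H i) m = 0.
    rewrite /crow; under eq_bigr do rewrite mulmxBl.
    rewrite sumrB sum_dl_l -[RHS](horth m Sm); congr (_ - _).
    rewrite [LHS](bigID S) /= [X in _ + X]big1 ?addr0 // => i hi.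
    by rewrite hoff // mul0mx.
  rewrite /crow /D; under eq_bigr do rewrite mulmxBl -mulmxA.
  rewrite sumrB -mulmx_sumr PC //; rewrite /crow in hcr; rewrite hcr mulmx0 subr0 /dl.
  by have -> : (k == m) = false by apply/negbTE; rewrite eq_sym -hSE.
have kj : (k == j) = false by rewrite eq_sym; exact: negbTE j2.
have := hD j; rewrite /D /dl kj hpair ?subrr ?mulmx0 ?subr0 //.
by rewrite /pair_set /= negb_or -!val_eqE /= km1E l0E j1 j3.
Qed.



Lemma exCML1 C k : PDb C -> reciprocal C -> inter k ->
  exists g : blk * blk * blk, CML_coeffs C k g.1.1 g.1.2 g.2.
Proof.
move=> hpd hr hk.
pose S := outer_set (km1 k) ord_max.
have [H [hoff horth]] := exist_sol S k hpd.
have hcl : cond_law C k S H (sigf C k H) by split.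
have := (hr (km1 k) k ord_max _ H (sigf C k H)).1 hcl.
case.
  by rewrite km1E /=; case/andP: hk => k0 kN; rewrite kN andbT ltn_predL.
move=> hpair _ _.
exists (H (km1 k), H ord_max, sigf C k H) => /=.
apply: (cond_law_ext _ _ hcl).
  move=> i; rewrite /S /outer_set /= km1E; case/andP: hk => k0 kN; have := ltn_ord i; lia.
move=> i; rewrite /Hf; case: eqP => [e|ne].
  by congr H; apply: val_inj; rewrite /= km1E.
case: eqP => [e|ne2].
  by congr H; apply: val_inj.
apply: hpair; rewrite /pair_set /= negb_or -!val_eqE /= km1E.
by apply/andP; split; apply/eqP.
Qed.

Lemma uniqCML C k a b c a' b' c' : PDb C -> inter k ->
  CML_coeffs C k a b c -> CML_coeffs C k a' b' c' -> [/\ a = a', b = b' & c = c'].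
Proof.
move=> hpd hk h h'.
have [o1 s1] := (CML_iff C a b c hk).1 h.
have [o2 s2] := (CML_iff C a' b' c' hk).1 h'.
pose D i := Hf a b k i - Hf a' b' k i.
have hD : forall i, D i = 0.
  apply: (uniq0 (S := cmlS k) hpd).
    by move=> i hi; rewrite /D !Hf_off // subrr.
  move=> m hm; rewrite /crow /D; under eq_bigr do rewrite mulmxBl.
  rewrite sumrB.
  have e1 := o1 m hm; have e2 := o2 m hm; rewrite !crow_eps in e1 e2.
  move/eqP: e1; rewrite subr_eq0 => /eqP <-.
  move/eqP: e2; rewrite subr_eq0 => /eqP <-.
  by rewrite subrr.
have ea : a = a'.
  have := hD (km1 k); rewrite /D /Hf km1E eqxx => /eqP; by rewrite subr_eq0 => /eqP.
have eb : b = b'.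
  have := hD ord_max; rewrite /D /Hf /=.
  have -> : (N == k.-1) = false by case/andP: hk => k0 kN; apply/negbTE; lia.
  by rewrite eqxx => /eqP; rewrite subr_eq0 => /eqP.
by subst; split.
Qed.


Lemma Mm_tr g1 g2 gk : (forall l, inter l -> (gk l)^T = gk l) ->
  forall i j, (Mm g1 g2 gk i j)^T = Mm g1 g2 gk j i.
Proof.
move=> hg i j; rewrite /Mm raddf_sum /=; apply: eq_bigr => l hl.
by rewrite !trmx_mul trmxK trmx_inv hg // mulmxA.
Qed.

Lemma recip_rows C1 C2 : PDb C1 -> PDb C2 -> symC C1 -> symC C2 ->
  reciprocal C1 -> reciprocal C2 -> same_reciprocal_model C1 C2 ->
  forall k, inter k -> forall j, Pb C1 k j = Pb C2 k j.
Proof.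
move=> p1 p2 s1 s2 r1 r2 hs k hk j.
have [e0 e1 e2] := hs k (etrans (esym (inter_le k)) hk).
have hk' := hk; case/andP: hk' => k0 kN.
case: (eqVneq j k) => [->|j2].
  by move: e0; rewrite /R0 /Ablk inord_val.
case: (eqVneq (j : nat) k.+1) => [e|j3].
  have -> : j = inord k.+1 by apply: val_inj; rewrite /= inordK // e ltnS.
  by move: e1; rewrite /Rplus /Bblk inord_val => /oppr_inj.
case: (eqVneq (j : nat) k.-1) => [e|j1].
  have -> : j = km1 k by apply: val_inj; rewrite /= km1E.
  rewrite (Psym s1 (km1 k) k) (Psym s2 (km1 k) k).
  by move: e2; rewrite /Rminus /Bblk prednK // inord_val => /oppr_inj.
by rewrite !zpat.
Qed.

Lemma rows_recip C1 C2 : symC C1 -> symC C2 ->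
  (forall k, inter k -> forall j, Pb C1 k j = Pb C2 k j) -> same_reciprocal_model C1 C2.
Proof.
move=> s1 s2 h n hn.
have hnN : (n < N.+1)%N by lia.
pose k : idx := inord n.
have kE : (k : nat) = n by rewrite inordK.
have hk : inter k by rewrite inter_le kE.
split.
- by rewrite /R0 /Ablk; apply: (h k hk).
- by rewrite /Rplus /Bblk; congr (- _); apply: (h k hk).
- rewrite /Rminus /Bblk; congr (- _).
  have e := h k hk (inord n.-1).
  move: (Psym s1 k (inord n.-1)) (Psym s2 k (inord n.-1)).
  have hn1 : n.-1.+1 = n by lia.
  rewrite /Pb hn1 -/k => -> ->.
  rewrite !trmxK; exact: e.
Qed.

Lemma main (C1 C2 : Cov) : nonsingular_gaussian_cov C1 -> nonsingular_gaussian_cov C2 ->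
  reciprocal C1 -> reciprocal C2 ->
  (same_reciprocal_model C1 C2 <-> same_CML_model C1 C2).
Proof.
move=> n1 n2 r1 r2.
have p1 := ngc_PDb n1; have p2 := ngc_PDb n2.
have s1 : symC C1 by case: n1.
have s2 : symC C2 by case: n2.
have : forall k : idx, exists g : blk * blk * blk,
    inter k -> CML_coeffs C1 k g.1.1 g.1.2 g.2.
  move=> k; case: (boolP (inter k)) => hk.
    by have [g hg] := exCML1 p1 r1 hk; exists g.
  by exists (0, 0, 0).
case/fin_all_exists => G hG.
pose g1 k := (G k).1.1; pose g2 k := (G k).1.2; pose gk k := (G k).2.
have c1 : CMLall g1 g2 gk C1 by [].
have hgs : forall l, inter l -> (gk l)^T = gk l by move=> l hl; apply: (gk_sym s1 c1).
have hgu : forall l, inter l -> gk l \in unitmx by move=> l hl; apply: (gk_unit p1 c1).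
have A1 := lemA p1 s1 c1.
split.
- move=> hs.
  have rows := recip_rows p1 p2 s1 s2 r1 r2 hs.
  have c2 : CMLall g1 g2 gk C2.
    apply: (lemB p2 s2) => [l hl|i j hj]; first by split; [exact: hgu | exact: hgs].
    rewrite (Psym s2 j i) -rows // A1 // Mm_tr //.
  move=> k hk G1 G2 Gk; rewrite -inter_le in hk; split => h.
    have [-> -> ->] := uniqCML p1 hk h (c1 k hk); exact: c2.
  have [-> -> ->] := uniqCML p2 hk h (c2 k hk); exact: c1.
- move=> hc.
  have c2 : CMLall g1 g2 gk C2.
    move=> l hl; apply/(hc l _); first by rewrite -inter_le.
    exact: c1.
  have A2 := lemA p2 s2 c2.
  apply: rows_recip => // k hk j; by rewrite A1 // A2.
Qed.

End Work.

Unset Implicit Arguments.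

Theorem proposition5 (R : realFieldType) (d N : nat)
  (C1 C2 : 'I_N.+1 -> 'I_N.+1 -> 'M[R]_d) :
  nonsingular_gaussian_cov C1 -> nonsingular_gaussian_cov C2 ->
  reciprocal C1 -> reciprocal C2 ->
  (same_reciprocal_model C1 C2 <-> same_CML_model C1 C2).
Proof. exact: main. Qed.
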